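(* Let $S$ be a real symmetric positive definite $n\times n$ matrix which is irreducible. Define \[{\operatorname{mr_{dual}}}(S)=\min\{\operatorname{rank}(\hat S)\mid S=E-\hat S,\ \hat S\ge 0,\ E\ge 0,\ E\text{ diagonal}\},\] where $\hat S,E$ range over real symmetric $n\times n$ matrices. Then ${\operatorname{mr_{dual}}}(S)=n-1$ if and only if $S\succeq_e 0$.
   Context: $M\ge0$ means positive semidefinite. A square matrix is irreducible if it cannot be brought into block-diagonal form (with at least two diagonal blocks) by a simultaneous permutation of its rows and columns. For a real square matrix $M$, $M\succeq_e 0$ means that the off-diagonal entries of $M$ are all $\ge 0$, or can be made so by changing the signs of selected rows and the corresponding columns (i.e. there is a diagonal matrix $P$ with diagonal entries $\pm1$ such that $PMP$ has all off-diagonal entries $\ge 0$). *)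

(* Defs.v *)
From HB Require Import structures.
From mathcomp Require Import all_boot all_order all_algebra all_fingroup.
From mathcomp Require Import reals.
Set Implicit Arguments. Unset Strict Implicit. Unset Printing Implicit Defensive.
Import Order.TTheory GRing.Theory Num.Theory.
Local Open Scope ring_scope.

Section Defs.
Variable R : realType.

Definition symmetric_mx n (A : 'M[R]_n) : Prop := A^T = A.

Definition psd_mx n (A : 'M[R]_n) : Prop :=
  symmetric_mx A /\ forall x : 'cV[R]_n, 0 <= (x^T *m A *m x) 0 0.

Definition pd_mx n (A : 'M[R]_n) : Prop :=
  symmetric_mx A /\ forall x : 'cV[R]_n, x != 0 -> 0 < (x^T *m A *m x) 0 0.

(* Irreducible: no simultaneous permutation of rows and columns brings A into
   block-diagonal form with (at least) two diagonal blocks, i.e. blocks of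
   sizes k and n-k with 0 < k < n. *)
Definition irreducible_mx n (A : 'M[R]_n) : Prop :=
  ~ exists (s : 'S_n) (k : nat), [/\ (0 < k)%N, (k < n)%N &
      forall i j : 'I_n, ((i < k)%N != (j < k)%N) ->
        (col_perm s (row_perm s A)) i j = 0].

Definition sign_nonneg_mx n (A : 'M[R]_n) : Prop :=
  exists d : 'rV[R]_n, (forall i, d 0 i = 1 \/ d 0 i = -1) /\
    forall i j : 'I_n, i != j -> 0 <= (diag_mx d *m A *m diag_mx d) i j.

Definition mr_dual_admissible n (S : 'M[R]_n) (r : nat) : Prop :=
  exists E Shat : 'M[R]_n,
    [/\ symmetric_mx E, symmetric_mx Shat, S = E - Shat, psd_mx Shat &
        [/\ psd_mx E, is_diag_mx E & \rank Shat = r]].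

Definition mr_dual_is n (S : 'M[R]_n) (k : nat) : Prop :=
  mr_dual_admissible S k /\ forall r, mr_dual_admissible S r -> (k <= r)%N.

End Defs.

(* Main.v *)
Require Import Defs.
From HB Require Import structures.
From mathcomp Require Import all_boot all_order all_algebra all_fingroup.
From mathcomp Require Import reals.
From mathcomp Require Import ring lra zify.
From Stdlib Require Import Classical.
Set Implicit Arguments. Unset Strict Implicit. Unset Printing Implicit Defensive.
Import Order.TTheory GRing.Theory Num.Theory.
Local Open Scope ring_scope.

Lemma I3 : forall a b i j k : 'I_3, a != b -> a != k -> b != k -> i != j -> i != k -> j != k -> (a == i) && (b == j) || (a == j) && (b == i).
Proof. by do 5! case=> [[|[|[|?]]] ?] //. Qed.

Section Aux.
Variable R : realType.

Lemma sumD n (F : 'I_n -> R) x : \sum_a ((a == x)%:R * F a) = F x.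
Proof.
rewrite (bigD1 x) //= eqxx mul1r big1 ?addr0 // => a /negbTE ->; by rewrite mul0r.
Qed.

Lemma diag_sym n (E : 'M[R]_n) : is_diag_mx E -> E^T = E.
Proof.
move/is_diag_mxP=> dE; apply/matrixP=> i j; rewrite mxE.
case: (eqVneq i j) => [->//|ij]; by rewrite !dE // eq_sym.
Qed.

Lemma addE m n (A B : 'M[R]_(m,n)) i j : (A + B) i j = A i j + B i j.
Proof. by rewrite mxE. Qed.
Lemma scaleE m n c (A : 'M[R]_(m,n)) i j : (c *: A) i j = c * A i j.
Proof. by rewrite mxE. Qed.

Lemma sq_ge0m n (y : 'cV[R]_n) : 0 <= (y^T *m y) 0 0.
Proof. rewrite mxE; apply: sumr_ge0 => k _; rewrite mxE -expr2 sqr_ge0 //. Qed.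

Lemma sqsum0 n (y : 'cV[R]_n) : (y^T *m y) 0 0 = 0 -> y = 0.
Proof.
rewrite mxE => h; apply/matrixP=> i j; rewrite (ord1 j) !mxE.
have /psumr_eq0P h2 : forall k : 'I_n, true -> 0 <= y^T 0 k * y k 0.
  by move=> k _; rewrite mxE -expr2 sqr_ge0.
have := h2 h i isT; rewrite mxE; move/eqP; rewrite mulf_eq0 orbb; by move/eqP.
Qed.

Lemma psd_ker n (A : 'M[R]_n) (x : 'cV[R]_n) : psd_mx A -> (x^T *m A *m x) 0 0 = 0 -> A *m x = 0.
Proof.
case=> sA pA hx; set y := A *m x.
have e1 : x^T *m A = y^T by rewrite /y trmx_mul sA.
pose a := (y^T *m y) 0 0; pose b := (y^T *m A *m y) 0 0.
have ha : 0 <= a by rewrite /a mxE; apply: sumr_ge0 => k _; rewrite mxE -expr2 sqr_ge0.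
have hb : 0 <= b by apply: pA.
have q : forall t, 0 <= 2 * t * a + t ^+ 2 * b.
  move=> t; have := pA (x + t *: y).
  have -> : (x + t *: y)^T *m A *m (x + t *: y) =
     x^T *m A *m x + (2 * t) *: (y^T *m y) + (t ^+ 2) *: (y^T *m A *m y).
    rewrite [(x + _)^T]linearD /= [(t *: y)^T]linearZ /= !mulmxDl !mulmxDr.
    rewrite -!scalemxAl -!scalemxAr !scalerA e1 -[y^T *m A *m x]mulmxA -/y.
    rewrite -!addrA; congr (_ + _); rewrite addrA -scalerDl; congr (_ + _).
      by congr (_ *: _); ring.
  by rewrite !addE !scaleE hx add0r.
have a0 : a = 0.
  apply/eqP; rewrite eq_le ha andbT leNgt; apply/negP=> ap.
  have hb1 : 0 < b + 1 by lra.
  pose u := a / (b + 1).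
  have hu : 0 < u by rewrite /u divr_gt0.
  have hub : u * b <= a.
    rewrite /u mulrAC ler_pdivrMr // ler_pM2l //; lra.
  have := q (- u); nra.
apply: sqsum0; exact: a0.
Qed.


Definition Lm n (v : 'I_n.+1) : 'M[R]_(n, n.+1) := \matrix_(p, a) (a == lift v p)%:R.
Definition Sred n (v : 'I_n.+1) (t : R) (S : 'M[R]_n.+1) : 'M[R]_n :=
  \matrix_(p, q) (S (lift v p) (lift v q) + t * (S (lift v p) v * S (lift v q) v)).

Lemma LT_lift n (v : 'I_n.+1) k (A : 'M[R]_(n, k)) p q : ((Lm v)^T *m A) (lift v p) q = A p q.
Proof.
rewrite mxE; under eq_bigr => i _ do rewrite !mxE (inj_eq lift_inj) eq_sym.
by rewrite sumD.
Qed.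

Lemma LT_v n (v : 'I_n.+1) k (A : 'M[R]_(n, k)) q : ((Lm v)^T *m A) v q = 0.
Proof.
rewrite mxE big1 // => i _; rewrite !mxE (negbTE (neq_lift v i)) mul0r //.
Qed.

Lemma AL_lift n (v : 'I_n.+1) k (A : 'M[R]_(k, n)) p q : (A *m Lm v) p (lift v q) = A p q.
Proof.
rewrite mxE; under eq_bigr => i _ do rewrite !mxE (inj_eq lift_inj) eq_sym mulrC.
by rewrite sumD.
Qed.

Lemma AL_v n (v : 'I_n.+1) k (A : 'M[R]_(k, n)) p : (A *m Lm v) p v = 0.
Proof.
rewrite mxE big1 // => i _; rewrite !mxE (negbTE (neq_lift v i)) mulr0 //.
Qed.

Lemma lift_neq n (v : 'I_n.+1) p : (lift v p == v) = false.
Proof. by rewrite eq_sym (negbTE (neq_lift v p)). Qed.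

Lemma outerE m (u : 'cV[R]_m) a b : (u *m u^T) a b = u a 0 * u b 0.
Proof. by rewrite mxE big_ord1 mxE. Qed.

Lemma lift_step n (v : 'I_n.+1) t (S : 'M[R]_n.+1) (E' : 'M[R]_n) :
  0 < t -> S^T = S -> is_diag_mx E' -> psd_mx (E' - Sred v t S) ->
  exists E, [/\ is_diag_mx E, psd_mx (E - S) &
     (\rank (E - S)%R <= (\rank (E' - Sred v t S)%R).+1)%N].
Proof.
move=> t0 sS dE' [sM pM].
set M' := E' - Sred v t S in sM pM *.
pose u : 'cV[R]_n.+1 := \col_a (if a == v then 1 else - t * S a v).
pose N := (Lm v)^T *m M' *m Lm v.
pose E : 'M[R]_n.+1 := \matrix_(a, b) match unlift v a, unlift v b with
   | Some p, Some q => E' p q | None, None => S v v + t^-1 | _, _ => 0 end.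
have Sab : forall a b, S a b = S b a.
  by move=> a b; rewrite -{1}sS mxE.
have tn0 : t != 0 by rewrite gt_eqF.
have key : E - S = t^-1 *: (u *m u^T) + N.
  apply/matrixP=> a b; rewrite !addE scaleE outerE /N.
  rewrite [E a b]mxE [(- S) a b]mxE.
  case: (unliftP v b) => [q ->|->]; rewrite ?AL_lift ?AL_v ?liftK ?unlift_none.
    case: (unliftP v a) => [p ->|->]; rewrite ?LT_lift ?LT_v ?liftK ?unlift_none.
      rewrite !mxE !lift_neq /=. by field.
    rewrite /u !mxE !lift_neq eqxx /=. rewrite Sab; by field.
  case: (unliftP v a) => [p ->|->]; rewrite ?LT_lift ?LT_v ?liftK ?unlift_none.
    rewrite /u !mxE !lift_neq eqxx /=. by field.
  rewrite /u !mxE eqxx /=. by field.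
exists E; split.
- apply/is_diag_mxP=> a b ab; rewrite mxE.
  case: (unliftP v a) ab => [p ->|->] ab; case: (unliftP v b) ab => [q ->|->] ab;
    rewrite ?liftK ?unlift_none //.
    by move/is_diag_mxP: dE'; apply; apply: contraNneq ab => /val_inj ->.
  by rewrite eqxx in ab.
- split.
    rewrite /symmetric_mx key linearD /= linearZ /= trmx_mul trmxK /N !trmx_mul trmxK sM.
    by rewrite mulmxA.
  move=> x; rewrite key mulmxDr mulmxDl addE; apply: addr_ge0.
    rewrite -scalemxAr -scalemxAl scaleE; apply: mulr_ge0; first by rewrite invr_ge0 ltW.
    have -> : x^T *m (u *m u^T) *m x = (u^T *m x)^T *m (u^T *m x).
      by rewrite trmx_mul trmxK !mulmxA.
    exact: sq_ge0m.
  have -> : x^T *m N *m x = (Lm v *m x)^T *m M' *m (Lm v *m x).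
    by rewrite /N trmx_mul !mulmxA.
  exact: pM.
rewrite key; apply: leq_trans (mxrank_add _ _) _; rewrite -[(\rank M').+1]add1n; apply: leq_add.
  apply: leq_trans (mxrank_scale _ _) _; apply: leq_trans (mxrankM_maxl _ _) _.
  exact: rank_leq_col.
rewrite /N; apply: leq_trans (mxrankM_maxl _ _) _; exact: mxrankM_maxr.
Qed.

Lemma pd_diag n (S : 'M[R]_n) i : pd_mx S -> 0 < S i i.
Proof.
case=> _ pS; have nz : delta_mx i 0 != 0 :> 'cV[R]_n.
  by apply/eqP=> /matrixP/(_ i 0); rewrite !mxE !eqxx /= => /eqP; rewrite oner_eq0.
have := pS _ nz; rewrite trmx_delta -rowE -colE !mxE //.
Qed.

Lemma Sred_sym n (v : 'I_n.+1) t (S : 'M[R]_n.+1) : S^T = S -> (Sred v t S)^T = Sred v t S.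
Proof.
move=> sS; have Sab : forall a b, S a b = S b a by move=> a b; rewrite -{1}sS mxE.
apply/matrixP=> p q; rewrite !mxE Sab; congr (_ + t * _); exact: mulrC.
Qed.

Lemma L_mul n (v : 'I_n.+1) k (A : 'M[R]_(n.+1, k)) p b : (Lm v *m A) p b = A (lift v p) b.
Proof.
rewrite mxE; under eq_bigr => i _ do rewrite !mxE; by rewrite sumD.
Qed.

Lemma mul_LT n (v : 'I_n.+1) k (A : 'M[R]_(k, n.+1)) a q : (A *m (Lm v)^T) a q = A a (lift v q).
Proof.
rewrite mxE; under eq_bigr => i _ do rewrite !mxE mulrC; by rewrite sumD.
Qed.

Lemma LLT n (v : 'I_n.+1) : Lm v *m (Lm v)^T = 1%:M.
Proof.
apply/matrixP=> p q; rewrite L_mul !mxE (inj_eq lift_inj) //.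
Qed.

Lemma Sred_pd n (v : 'I_n.+1) t (S : 'M[R]_n.+1) : 0 < t -> pd_mx S -> pd_mx (Sred v t S).
Proof.
move=> t0 [sS pS]; split; first exact: Sred_sym.
pose w : 'cV[R]_n := \col_p S (lift v p) v.
have -> : Sred v t S = Lm v *m S *m (Lm v)^T + t *: (w *m w^T).
  apply/matrixP=> p q; rewrite addE scaleE outerE mul_LT L_mul !mxE //.
move=> x x0; rewrite mulmxDr mulmxDl addE; apply: ltr_wpDr.
  rewrite -scalemxAr -scalemxAl scaleE; apply: mulr_ge0; [exact: ltW|].
  have -> : x^T *m (w *m w^T) *m x = (w^T *m x)^T *m (w^T *m x).
    by rewrite trmx_mul trmxK !mulmxA.
  exact: sq_ge0m.
have -> : x^T *m (Lm v *m S *m (Lm v)^T) *m x = ((Lm v)^T *m x)^T *m S *m ((Lm v)^T *m x).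
  by rewrite trmx_mul trmxK !mulmxA.
apply: pS; apply: contraNneq x0 => h.
by rewrite -[x]mul1mx -(LLT v) -mulmxA h mulmx0.
Qed.

Lemma dAd_E n (d : 'rV[R]_n) (A : 'M[R]_n) i j :
  (diag_mx d *m A *m diag_mx d) i j = d 0 i * A i j * d 0 j.
Proof. by rewrite mul_mx_diag mxE mul_diag_mx mxE. Qed.

Lemma sgn_sq (x : R) : x = 1 \/ x = -1 -> x * x = 1.
Proof. by case=> ->; rewrite ?mulr1 ?mulrNN ?mulr1. Qed.

Lemma tri_nonsign n (S : 'M[R]_n) i j k : i != j -> j != k -> i != k ->
  S i j * S j k * S i k < 0 -> ~ sign_nonneg_mx S.
Proof.
move=> ij jk ik h [d [hd hp]].
have h1 := hp _ _ ij; have h2 := hp _ _ jk; have h3 := hp _ _ ik.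
rewrite !dAd_E in h1 h2 h3.
have := mulr_ge0 (mulr_ge0 h1 h2) h3.
have -> : d 0 i * S i j * d 0 j * (d 0 j * S j k * d 0 k) * (d 0 i * S i k * d 0 k)
  = (d 0 i * d 0 i) * (d 0 j * d 0 j) * (d 0 k * d 0 k) * (S i j * S j k * S i k) by ring.
rewrite (sgn_sq (hd i)) (sgn_sq (hd j)) (sgn_sq (hd k)) !mul1r; lra.
Qed.

Lemma seq_min (X : eqType) (s : seq X) (h : X -> R) :
  (forall x, x \in s -> 0 < h x) -> exists t, 0 < t /\ forall x, x \in s -> t <= h x.
Proof.
elim: s => [|x s IH] hs; first by exists 1; split => //; rewrite ltr01.
have [t [t0 ht]] : exists t, 0 < t /\ forall y, y \in s -> t <= h y.
  by apply: IH => y ys; apply: hs; rewrite inE ys orbT.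
have hx : 0 < h x by apply: hs; rewrite inE eqxx.
case: (leP t (h x)) => c.
  exists t; split => // y; rewrite inE => /orP[/eqP ->|/ht] //.
exists (h x); split => // y; rewrite inE => /orP[/eqP ->|/ht] //.
move=> ty; apply: le_trans ty; exact: ltW.
Qed.

Lemma small_t n (F G : 'I_n -> 'I_n -> R) :
  exists t, 0 < t /\ forall a b, F a b != 0 -> t * `|G a b| < `|F a b|.
Proof.
pose s := [seq x <- enum [set: 'I_n * 'I_n] | F x.1 x.2 != 0].
pose h := fun x : 'I_n * 'I_n => `|F x.1 x.2| / (`|G x.1 x.2| + 1).
have hpos : forall x, x \in s -> 0 < h x.
  move=> x; rewrite mem_filter => /andP[nz _]; apply: divr_gt0; first by rewrite normr_gt0.
  by rewrite ltr_wpDl.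
have [t [t0 ht]] := seq_min hpos.
exists t; split => // a b nz.
have := ht (a, b); rewrite mem_filter nz mem_enum in_setT /= => /(_ isT).
have g1 : 0 < `|G a b| + 1 by rewrite ltr_wpDl.
rewrite /h ler_pdivlMr // => hh; apply: lt_le_trans hh; rewrite mulrDr mulr1 ltrDl //.
Qed.

Lemma sign_pres (x y : R) : x != 0 -> `|y| < `|x| -> 0 < (x + y) * x.
Proof.
move=> x0; case: (ltrgtP x 0) => hx; last by rewrite hx eqxx in x0.
  rewrite (ltr0_norm hx) ltr_norml => /andP[h1 h2]; nra.
rewrite (gtr0_norm hx) ltr_norml => /andP[h1 h2]; nra.
Qed.

Lemma sq_pos (x : R) : x != 0 -> 0 < x ^+ 2.
Proof. by move=> x0; rewrite lt0r sqrf_eq0 x0 sqr_ge0. Qed.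

Lemma ext_sign m (S : 'M[R]_m.+1) v t : 0 < t -> S^T = S ->
  (forall a b, S a b != 0 -> t * `|S a v * S b v| < `|S a b|) ->
  (forall i j k, 0 <= S i j * S j k * S i k) ->
  sign_nonneg_mx (Sred v t S) -> sign_nonneg_mx S.
Proof.
move=> t0 sS hsm ht [d' [hd' hp']].
have Sab : forall a b, S a b = S b a by move=> a b; rewrite -{1}sS mxE.
have hA : forall p q, p != q -> 0 <= d' 0 p * S (lift v p) (lift v q) * d' 0 q.
  move=> p q pq; have h := hp' p q pq; rewrite dAd_E mxE in h.
  set A := S (lift v p) (lift v q) in h *.
  set x := S (lift v p) v in h; set y := S (lift v q) v in h.
  case: (eqVneq A 0) => [->|A0]; first by rewrite mulr0 mul0r.
  have sp : 0 < (A + t * (x * y)) * A.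
    apply: (sign_pres A0). rewrite normrM (gtr0_norm t0). exact: hsm A0.
  have B0 : A + t * (x * y) != 0 by apply: contraTneq sp => ->; rewrite mul0r ltxx.
  have := mulr_ge0 h (ltW sp).
  have -> : d' 0 p * (A + t * (x * y)) * d' 0 q * ((A + t * (x * y)) * A) =
     (d' 0 p * A * d' 0 q) * (A + t * (x * y)) ^+ 2 by ring.
  by rewrite pmulr_lge0 // sq_pos.
pose c q := d' 0 q * S (lift v q) v.
have cc : forall p q, 0 <= c p * c q.
  move=> p q; case: (eqVneq p q) => [->|pq]; first by rewrite -expr2 sqr_ge0.
  have h := hp' p q pq; rewrite dAd_E mxE in h.
  have h2 := hA p q pq.
  set A := S (lift v p) (lift v q) in h h2 *.
  have tri := ht (lift v p) (lift v q) v.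
  rewrite -/A in tri.
  rewrite /c; set x := S (lift v p) v in h tri *; set y := S (lift v q) v in h tri *.
  case: (eqVneq A 0) => [A0|A0].
    rewrite A0 add0r in h.
    have e : d' 0 p * (t * (x * y)) * d' 0 q = t * (d' 0 p * x * (d' 0 q * y)) by ring.
    rewrite e in h.
    by rewrite pmulr_rge0 in h.
  have := mulr_ge0 h2 tri.
  have -> : d' 0 p * A * d' 0 q * (A * y * x) = (d' 0 p * x * (d' 0 q * y)) * A ^+ 2 by ring.
  by rewrite pmulr_lge0 // sq_pos.
pose sv : R := match [pick p | c p != 0] with
  | Some p => if 0 < c p then 1 else -1 | None => 1 end.
have hsv : forall q, 0 <= sv * c q.
  rewrite /sv; case: pickP => [p /= cp|none] q.
    case: ifP => cpos.
      by rewrite mul1r -(pmulr_rge0 _ cpos) cc.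
    have cneg : c p < 0 by rewrite lt_neqAle cp /= leNgt cpos.
    have := cc p q; nra.
  by move/negbT: (none q); rewrite negbK => /eqP ->; rewrite mulr0.
have svpm : sv = 1 \/ sv = -1.
  by rewrite /sv; case: pickP => [p _|_]; [case: ifP => _; [left|right]|left].
pose d : 'rV[R]_m.+1 := \row_a match unlift v a with Some p => d' 0 p | None => sv end.
exists d; split.
  move=> a; rewrite /d mxE; case: (unliftP v a) => [p _|_] //.
move=> a b ab; rewrite dAd_E /d !mxE.
case: (unliftP v a) ab => [p ->|->] ab; case: (unliftP v b) ab => [q ->|->] ab;
  rewrite ?liftK ?unlift_none.
- apply: hA; apply: contraNneq ab => ->; by [].
- by rewrite mulrC; exact: hsv p.
- by rewrite Sab -mulrA [S _ _ * _]mulrC; exact: hsv q.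
- by rewrite eqxx in ab.
Qed.

Lemma psd0 n : psd_mx (0 : 'M[R]_n).
Proof. split; first by rewrite /symmetric_mx trmx0. by move=> x; rewrite mulmx0 mul0mx mxE. Qed.

Lemma hard n (S : 'M[R]_n) : pd_mx S -> ~ sign_nonneg_mx S ->
  exists E, [/\ is_diag_mx E, psd_mx (E - S) & (\rank (E - S)%R + 2 <= n)%N].
Proof.
elim: n S => [|m IH] S pdS nsig.
  by exfalso; apply: nsig; exists 0; split; case.
have sS : S^T = S by case: pdS.
have Sab : forall a b, S a b = S b a by move=> a b; rewrite -{1}sS mxE.
have step : forall v t, 0 < t -> ~ sign_nonneg_mx (Sred v t S) ->
    exists E, [/\ is_diag_mx E, psd_mx (E - S) & (\rank (E - S)%R + 2 <= m.+1)%N].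
  move=> v t t0 ns; have [E' [dE' pE' rk]] := IH _ (@Sred_pd _ v t S t0 pdS) ns.
  have [E [dE pE rkE]] := lift_step (v := v) t0 sS dE' pE'.
  by exists E; split => //; apply: leq_trans (leq_add rkE (leqnn 2)) _; rewrite addSn ltnS.
case: (classic (exists i j k, S i j * S j k * S i k < 0)) => [[i [j [k hijk]]]|hno].
  have ij : i != j.
    apply/eqP=> e; subst j; have := pd_diag i pdS; move: hijk.
    rewrite -mulrA -expr2; nra.
  have jk : j != k.
    apply/eqP=> e; subst k; have := pd_diag j pdS; move: hijk.
    rewrite mulrAC -expr2; nra.
  have ik : i != k.
    apply/eqP=> e; subst k; have := pd_diag i pdS; move: hijk.
    rewrite (Sab j i) -expr2; nra.
  have Sij0 : S i j != 0 by apply: contraTneq hijk => ->; rewrite !mul0r ltxx.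
  have Sjk0 : S j k != 0 by apply: contraTneq hijk => ->; rewrite mulr0 mul0r ltxx.
  have Sik0 : S i k != 0 by apply: contraTneq hijk => ->; rewrite mulr0 ltxx.
  case: (eqVneq m 2%N) => [m2|m2].
    subst m.
    pose t := - S i j / (S i k * S j k).
    have D0 : S i k * S j k != 0 by rewrite mulf_neq0.
    have t0 : 0 < t.
      have -> : t = - (S i j * S j k * S i k) / (S i k * S j k) ^+ 2.
        by rewrite /t; field; rewrite Sjk0 Sik0.
      by apply: divr_gt0; [rewrite oppr_gt0|rewrite sq_pos].
    have dE' : is_diag_mx (Sred k t S).
      apply/is_diag_mxP=> p q pq; rewrite mxE.
      have := @I3 (lift k p) (lift k q) i j k.
      rewrite (inj_eq lift_inj) !lift_neq /=.
      move=> /(_ pq isT isT ij ik jk) /orP[] /andP[/eqP -> /eqP ->].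
        by rewrite /t; field; rewrite Sjk0 Sik0.
      by rewrite /t Sab [S j k * _]mulrC; field; rewrite Sjk0 Sik0.
    have [E [dE pE rkE]] := lift_step (v := k) t0 sS dE' (eq_ind_r _ (psd0 _) (subrr _)).
    by exists E; split => //; move: rkE; rewrite subrr mxrank0 addn2 ltnS.
  have [v /and3P[vi vj vk]] : exists v : 'I_m.+1, [&& v != i, v != j & v != k].
    case: (pickP (fun v : 'I_m.+1 => [&& v != i, v != j & v != k])) => [v hv|none].
      by exists v.
    have hv : forall w, (w <= m)%N -> w = nat_of_ord i \/ w = nat_of_ord j \/ w = nat_of_ord k.
      move=> w wm; have := none (inord w); rewrite -!val_eqE /= inordK //.
      by move/negbT; rewrite !negb_and !negbK => /or3P[/eqP|/eqP|/eqP]; auto.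
    have hi := ltn_ord i; have hj := ltn_ord j; have hk := ltn_ord k.
    have ij' : nat_of_ord i != nat_of_ord j by [].
    have jk' : nat_of_ord j != nat_of_ord k by [].
    have ik' : nat_of_ord i != nat_of_ord k by [].
    have m3 : (3 <= m)%N.
      move: m2 ij' jk' ik' => /eqP m2 /eqP ij' /eqP jk' /eqP ik'; clear hv none; lia.
    have h0 := hv 0%N ltac:(lia); have h1 := hv 1%N ltac:(lia).
    have h2 := hv 2%N ltac:(lia); have h3 := hv 3%N m3.
    move: ij' jk' ik' => /eqP ij' /eqP jk' /eqP ik'; clear hv none; lia.
  have [t [t0 hsm]] := small_t S (fun a b => S a v * S b v).
  apply: (step v t t0).
  have [pi ei] : exists pi, i = lift v pi.
    by case: (unliftP v i) vi => [p -> _|->]; [exists p|rewrite eqxx].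
  have [pj ej] : exists pj, j = lift v pj.
    by case: (unliftP v j) vj => [p -> _|->]; [exists p|rewrite eqxx].
  have [pk ek] : exists pk, k = lift v pk.
    by case: (unliftP v k) vk => [p -> _|->]; [exists p|rewrite eqxx].
  subst i j k.
  have sp : forall a b, S (lift v a) (lift v b) != 0 ->
      0 < Sred v t S a b * S (lift v a) (lift v b).
    move=> a b nz; rewrite mxE; apply: (sign_pres nz).
    by rewrite normrM (gtr0_norm t0); apply: hsm.
  apply: (tri_nonsign (i := pi) (j := pj) (k := pk)).
  - by apply: contraNneq ij => ->.
  - by apply: contraNneq jk => ->.
  - by apply: contraNneq ik => ->.
  have p1 := sp _ _ Sij0; have p2 := sp _ _ Sjk0; have p3 := sp _ _ Sik0.
  have := mulr_gt0 (mulr_gt0 p1 p2) p3; nra.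
have nt : forall i j k, 0 <= S i j * S j k * S i k.
  by move=> i j k; rewrite leNgt; apply/negP => h; apply: hno; exists i, j, k.
have [t [t0 hsm]] := small_t S (fun a b => S a (@ord0 m) * S b ord0).
apply: (step ord0 t t0) => hs; apply: nsig; exact: ext_sign t0 sS hsm nt hs.
Qed.

Lemma irr_closed n (S : 'M[R]_n) (Z : {set 'I_n}) i0 b0 : S^T = S -> irreducible_mx S ->
  (forall a b, a \in Z -> b \notin Z -> S a b = 0) -> i0 \in Z -> b0 \notin Z -> False.
Proof.
move=> sS irr cl iZ bZ.
have Sab : forall a b, S a b = S b a by move=> a b; rewrite -{1}sS mxE.
pose l := enum Z ++ enum (~: Z).
have sl : size l = n by rewrite size_cat -!cardE cardsC card_ord.
have ul : uniq l.
  rewrite cat_uniq !enum_uniq /= andbT; apply/hasPn => c.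
  by rewrite !mem_enum inE.
pose f (a : 'I_n) := nth i0 l a.
have finj : injective f.
  move=> a c /eqP; rewrite /f nth_uniq ?sl // => /eqP; exact: val_inj.
pose s := perm finj.
pose k := #|Z|.
have k0 : (0 < k)%N by rewrite /k (cardsD1 i0) iZ.
have kn : (k < n)%N.
  have := cardsC Z; rewrite card_ord (cardsD1 b0 (~: Z)) inE bZ /k; lia.
have sin : forall a : 'I_n, (a < k)%N -> s a \in Z.
  move=> a ak; rewrite permE /f nth_cat -cardE -/k ak.
  by rewrite -mem_enum mem_nth // -cardE.
have sout : forall a : 'I_n, ~~ (a < k)%N -> s a \notin Z.
  move=> a ak; rewrite permE /f nth_cat -cardE -/k (negbTE ak).
  have : nth i0 (enum (~: Z)) (a - k) \in enum (~: Z).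
    apply: mem_nth; rewrite -cardE.
    have := cardsC Z; rewrite card_ord -/k; have := ltn_ord a; lia.
  by rewrite mem_enum inE.
apply: irr; exists s, k; split => // a b hab; rewrite !mxE.
case: (boolP (a < k)%N) hab => ha hab.
  have hb : ~~ (b < k)%N by move: hab; case: (b < k)%N.
  exact: cl (sin _ ha) (sout _ hb).
have hb : (b < k)%N by move: hab; case: (b < k)%N.
rewrite Sab; exact: cl (sin _ hb) (sout _ ha).
Qed.

Lemma quadE n (A : 'M[R]_n) (x : 'cV[R]_n) :
  (x^T *m A *m x) 0 0 = \sum_i \sum_j x i 0 * A i j * x j 0.
Proof.
rewrite mxE exchange_big /=; apply: eq_bigr => j _.
rewrite mxE mulr_suml; apply: eq_bigr => i _; by rewrite mxE.
Qed.

Lemma lower n (S : 'M[R]_n) E Shat : S^T = S -> irreducible_mx S -> sign_nonneg_mx S ->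
  psd_mx Shat -> is_diag_mx E -> S = E - Shat -> (n.-1 <= \rank Shat)%N.
Proof.
move=> sS irr [d [hd hp]] pSh dE eS.
have sSh : Shat^T = Shat by case: pSh.
have eSh : Shat = E - S by rewrite eS opprB addrC subrK.
have Shat_off : forall i j, i != j -> Shat i j = - S i j.
  move=> i j ij; rewrite eSh !mxE (is_diag_mxP dE) // add0r //.
rewrite leqNgt; apply/negP => rk.
have n0 : (0 < n)%N by lia.
pose i0 := Ordinal n0.
pose K := kermx Shat.
pose H := kermx (delta_mx i0 (0 : 'I_1) : 'M[R]_(n, 1)).
have rK := mxrank_ker Shat.
have rH := mxrank_ker (delta_mx i0 (0 : 'I_1) : 'M[R]_(n, 1)); rewrite mxrank_delta in rH.
have := mxrank_sum_cap K H; have := rank_leq_col (K + H)%MS.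
rewrite /K /H rK rH => h1 h2.
have rC : (0 < \rank (K :&: H)%MS)%N by rewrite /K /H; lia.
have [i yi] : exists i, row i (K :&: H)%MS != 0.
  case: (pickP (fun i => row i (K :&: H)%MS != 0)) => [i hi|none]; first by exists i.
  exfalso; move: rC; rewrite lt0n mxrank_eq0 => /negP; apply; apply/eqP/row_matrixP => i.
  by rewrite row0; apply/eqP; move: (none i) => /negbT; rewrite negbK.
set y := row i _ in yi.
have /sub_kermxP yS : (y <= K)%MS by apply: submx_trans (row_sub _ _) (capmxSl _ _).
have /sub_kermxP ye : (y <= H)%MS by apply: submx_trans (row_sub _ _) (capmxSr _ _).
clearbody y.
have y0 : y 0 i0 = 0.
  by move: ye; rewrite -colE => /matrixP/(_ 0 0); rewrite !mxE.
have [b yb] : exists b, y 0 b != 0.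
  case: (pickP (fun b => y 0 b != 0)) => [b hb|none]; first by exists b.
  exfalso; move/eqP: yi; apply; apply/matrixP => a c; rewrite (ord1 a) !mxE.
  by move: (none c) => /negbT; rewrite negbK => /eqP.
pose x := y^T.
have Sx : Shat *m x = 0.
  have : (y *m Shat)^T = 0 by rewrite yS trmx0.
  by rewrite trmx_mul sSh.
pose w : 'cV[R]_n := \col_a (d 0 a * `|y 0 a|).
have qx : (x^T *m Shat *m x) 0 0 = 0 by rewrite -mulmxA Sx mulmx0 mxE.
have qw : (w^T *m Shat *m w) 0 0 <= (x^T *m Shat *m x) 0 0.
  rewrite !quadE; apply: ler_sum => a _; apply: ler_sum => c _; rewrite !mxE.
  case: (eqVneq a c) => [<-|ac].
    have e : `|y 0 a| * `|y 0 a| = y 0 a * y 0 a by rewrite -normrM ger0_norm // -expr2 sqr_ge0.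
    rewrite le_eqVlt; apply/orP; left; apply/eqP.
    have -> : d 0 a * `|y 0 a| * Shat a a * (d 0 a * `|y 0 a|) =
       Shat a a * (d 0 a * d 0 a) * (`|y 0 a| * `|y 0 a|) by ring.
    by rewrite sgn_sq // e; ring.
  rewrite Shat_off //; have := hp a c ac; rewrite dAd_E.
  have n1 := ler_norm (y 0 a * y 0 c); have n2 := ler_norm (- (y 0 a * y 0 c)).
  rewrite normrN normrM in n1 n2.
  by case: (hd a) => ->; case: (hd c) => ->; nra.
have qw0 : (w^T *m Shat *m w) 0 0 = 0.
  apply/eqP; rewrite eq_le; apply/andP; split; first by rewrite -qx. by case: pSh.
have Sw := psd_ker pSh qw0.
have clo : forall a c, y 0 a = 0 -> S a c != 0 -> y 0 c = 0.
  move=> a c ya Sac; case: (eqVneq a c) => [<-//|ac].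
  have hs : \sum_j d 0 a * (Shat a j * w j 0) = 0.
    rewrite -mulr_sumr; have := Sw; move/matrixP/(_ a 0); rewrite !mxE => ->; by rewrite mulr0.
  pose F j := - (d 0 a * (Shat a j * w j 0)).
  have sF : \sum_j F j = 0 by rewrite sumrN hs oppr0.
  have Fge : forall j, true -> 0 <= F j.
    move=> j _; rewrite /F /w mxE; case: (eqVneq a j) => [<-|aj].
      by rewrite ya normr0 !mulr0 oppr0.
    rewrite Shat_off //; have := hp a j aj; rewrite dAd_E => h.
    have : 0 <= d 0 a * S a j * d 0 j * `|y 0 j| by apply: mulr_ge0.
    by congr (0 <= _); ring.
  have := psumr_eq0P Fge sF (i := c) isT; rewrite /F /w mxE Shat_off //.
  have dn : forall j, d 0 j != 0 by move=> j; case: (hd j) => ->; rewrite ?oppr_eq0 oner_eq0.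
  move=> /eqP; rewrite oppr_eq0 !mulf_eq0 oppr_eq0 (negbTE (dn a)) (negbTE (dn c)) (negbTE Sac).
  by rewrite normr_eq0 /= => /eqP.
pose Z := [set a | y 0 a == 0].
apply: (irr_closed (Z := Z) (i0 := i0) (b0 := b) sS irr).
- move=> a c; rewrite !inE => /eqP ya yc; apply/eqP; apply: contraNT yc => Sac.
  by apply/eqP; apply: clo ya Sac.
- by rewrite inE y0.
by rewrite inE.
Qed.

Lemma psd_add n (A B : 'M[R]_n) : psd_mx A -> psd_mx B -> psd_mx (A + B).
Proof.
move=> [sA pA] [sB pB]; split; first by rewrite /symmetric_mx linearD /= sA sB.
by move=> x; rewrite mulmxDr mulmxDl addE; apply: addr_ge0.
Qed.

Lemma pd_psd n (A : 'M[R]_n) : pd_mx A -> psd_mx A.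
Proof.
move=> [sA pA]; split => // x; case: (eqVneq x 0) => [->|x0].
  by rewrite mulmx0 mxE.
exact: ltW (pA x x0).
Qed.

Lemma lap n (S : 'M[R]_n) : S^T = S -> pd_mx S -> sign_nonneg_mx S ->
  exists E Shat : 'M[R]_n, [/\ symmetric_mx E, symmetric_mx Shat, S = E - Shat, psd_mx Shat &
    [/\ psd_mx E, is_diag_mx E & (\rank Shat <= n.-1)%N]].
Proof.
move=> sS pdS [d [hd hp]].
have Sab : forall a b, S a b = S b a by move=> a b; rewrite -{1}sS mxE.
pose r : 'rV[R]_n := \row_i \sum_j d 0 i * d 0 j * S i j.
pose E := diag_mx r. pose Shat := E - S.
have pSh : psd_mx Shat.
  split; first by rewrite /symmetric_mx /Shat linearB /= tr_diag_mx sS.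
  move=> x; rewrite quadE.
  pose T := \sum_i \sum_j (d 0 i * d 0 j * S i j * (x i 0 * x i 0) - S i j * x i 0 * x j 0).
  pose T' := \sum_i \sum_j (d 0 i * d 0 j * S i j * (x j 0 * x j 0) - S i j * x i 0 * x j 0).
  have q1 : \sum_i \sum_j x i 0 * Shat i j * x j 0 = T.
    apply: eq_bigr => i _.
    rewrite (eq_bigr (fun j => x i 0 * (r 0 i *+ (i == j)) * x j 0 - x i 0 * S i j * x j 0));
      last by move=> j _; rewrite /Shat /E !mxE mulrBr mulrBl.
    rewrite sumrB (bigD1 i) //= eqxx mulr1n big1 ?addr0; last first.
      by move=> j /negbTE; rewrite eq_sym => ->; rewrite mulr0n mulr0 mul0r.
    rewrite sumrB; congr (_ - _).
      rewrite /r mxE mulr_sumr mulr_suml; apply: eq_bigr => j _; ring.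
    apply: eq_bigr => j _; ring.
  have q2 : T = T'.
    rewrite /T exchange_big /=; apply: eq_bigr => i _; apply: eq_bigr => j _.
    rewrite (Sab j i); ring.
  have q3 : 0 <= T + T'.
    rewrite /T /T' -big_split; apply: sumr_ge0 => i _; rewrite -big_split.
    apply: sumr_ge0 => j _ /=.
    case: (eqVneq i j) => [<-|ij].
      by rewrite (sgn_sq (hd i)) mul1r -mulrA subrr addr0.
    have := hp i j ij; rewrite dAd_E.
    have := sqr_ge0 (x i 0 - x j 0); have := sqr_ge0 (x i 0 + x j 0).
    by case: (hd i) => ->; case: (hd j) => ->; nra.
  rewrite q1; lra.
have eE : E = S + Shat by rewrite /Shat addrC subrK.
exists E, Shat; split => //.
- by rewrite /symmetric_mx tr_diag_mx.
- by case: pSh.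
- by rewrite /Shat opprB addrC subrK.
split; first by rewrite eE; apply: psd_add (pd_psd pdS) pSh.
  exact: diag_mx_is_diag.
case: (posnP n) => [n0|n0].
  by have := rank_leq_row Shat; lia.
have dS : d *m Shat = 0.
  apply/matrixP => a j; rewrite (ord1 a) [RHS]mxE mxE.
  rewrite (eq_bigr (fun i => d 0 i * (r 0 i *+ (i == j)) - d 0 i * S i j));
    last by move=> i _; rewrite /Shat /E !mxE mulrBr.
  rewrite sumrB (bigD1 j) //= eqxx mulr1n big1 ?addr0; last first.
    by move=> i /negbTE ->; rewrite mulr0n mulr0.
  apply/eqP; rewrite /r mxE mulr_sumr subr_eq0; apply/eqP; apply: eq_bigr => i _.
  rewrite (Sab i j) !mulrA (sgn_sq (hd j)) mul1r //.
have dn0 : d != 0.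
  apply/eqP => /matrixP/(_ 0 (Ordinal n0)); rewrite mxE; case: (hd (Ordinal n0)) => ->.
    by move/eqP; rewrite oner_eq0.
  by move/eqP; rewrite oppr_eq0 oner_eq0.
have : (d <= kermx Shat)%MS by apply/sub_kermxP.
move/mxrankS; rewrite rank_rV dn0 mxrank_ker /=; lia.
Qed.

End Aux.

Unset Implicit Arguments.
Set Strict Implicit.

Theorem theorem3 (R : realType) (n : nat) (S : 'M[R]_n) :
  symmetric_mx S -> pd_mx S -> irreducible_mx S ->
  (mr_dual_is S n.-1 <-> sign_nonneg_mx S).
Proof.
move=> sS pdS irr; split.
  case=> adm mn; apply: NNPP => ns.
  have [E [dE pE rk]] := hard pdS ns.
  have : mr_dual_admissible S (\rank (E - S)%R).
    exists E, (E - S); split => //.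
    - exact: diag_sym.
    - by case: pE.
    - by rewrite opprB addrC subrK.
    split => //.
    have -> : E = S + (E - S) by rewrite addrC subrK.
    exact: psd_add (pd_psd pdS) pE.
  move/mn; lia.
move=> sg; have [E [Shat [sE sSh eS pSh [pE dE rk]]]] := lap sS pdS sg.
have lb := lower sS irr sg pSh dE eS.
split.
  exists E, Shat; split => //; split => //; apply/eqP; rewrite eqn_leq rk lb //.
move=> r [E' [Sh' [_ _ eS' pSh' [_ dE' <-]]]].
exact: lower sS irr sg pSh' dE' eS'.
Qed.
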